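(* Let $P$ be a finite poset and $f\colon\mathcal{J}(P)\to\mathbb{R}$ a real-valued statistic. Suppose that, viewing $f$ as a statistic with values in $\mathbb{R}(q)$, we have $f=c(q)+\sum_{p\in P}c_p(q)T_p^q$ for some rational functions $c(q),c_p(q)\in\mathbb{R}(q)$. Then none of $c(q)$, $c_p(q)$ has a singularity at any nonnegative real number, and for every real $z\ge0$ we have $f=c(z)+\sum_{p\in P}c_p(z)\,T_p^q|_{z}$, where $T_p^q|_z=T_p^+-zT_p^-$.
   Context: $\mathcal{J}(P)$ is the set of order ideals of $P$. For $p\in P$, $I\in\mathcal{J}(P)$: $T_p^+(I)=1$ if $p$ is a minimal element of $P\setminus I$, else $0$; $T_p^-(I)=1$ if $p$ is a maximal element of $I$, else $0$. $T_p^q\coloneqq T_p^+-qT_p^-$ is a statistic $\mathcal{J}(P)\to\mathbb{R}(q)$, where $q$ is an indeterminate and $\mathbb{R}(q)$ the field of rational functions. *)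

(* Defs.v *)
From HB Require Import structures.
From mathcomp Require Import all_boot all_order all_algebra.
From mathcomp Require Import fraction.
From mathcomp Require Import reals.
Set Implicit Arguments. Unset Strict Implicit. Unset Printing Implicit Defensive.
Import Order.TTheory GRing.Theory Num.Theory.
Local Open Scope ring_scope.
Local Open Scope order_scope.

Section Defs.
Context {d : Order.disp_t} (P : finPOrderType d).

Definition is_order_ideal (I : {set P}) : bool :=
  [forall x, forall y, (x \in I) && (y <= x) ==> (y \in I)].

Definition order_ideals : {set {set P}} := [set I | is_order_ideal I].

Definition Tplus (p : P) (I : {set P}) : nat :=
  [&& p \notin I & [forall x, (x < p) ==> (x \in I)]].

Definition Tminus (p : P) (I : {set P}) : nat :=
  [&& p \in I & [forall x, (p < x) ==> (x \notin I)]].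
End Defs.

Section Rat.
Context (R : realType).
Definition ratfun := {fraction {poly R}}.
Definition rconst (a : R) : ratfun := tofrac (a%:P).

Definition Tq {d : Order.disp_t} (P : finPOrderType d) (p : P) (I : {set P}) : ratfun :=
  tofrac (((Tplus p I)%:R - 'X * (Tminus p I)%:R : {poly R})).

Definition Tq_at {d : Order.disp_t} (P : finPOrderType d) (p : P) (I : {set P}) (z : R) : R :=
  (Tplus p I)%:R - z * (Tminus p I)%:R.

(* c has no singularity at z, with value v there: c = n/m with m(z) <> 0, v = n(z)/m(z)
   (the value is independent of the chosen representation). *)
Definition regular_at_with_value (c : ratfun) (z v : R) : Prop :=
  exists n m : {poly R}, [/\ m.[z] != 0, c = tofrac n / tofrac m & v = n.[z] / m.[z]].
End Rat.

(* Main.v *)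
Require Import Defs.
From HB Require Import structures.
From mathcomp Require Import all_boot all_order all_algebra.
From mathcomp Require Import fraction generic_quotient.
From mathcomp Require Import reals.
From mathcomp Require Import ring lra.
Import Order.TTheory GRing.Theory Num.Theory.
Set Implicit Arguments. Unset Strict Implicit. Unset Printing Implicit Defensive.

Section Comb.
Local Open Scope order_scope.
Context {d : Order.disp_t} (P : finPOrderType d).
Implicit Types (I S : {set P}) (p r x y : P).

Definition tp p I : bool := [&& p \notin I & [forall x, (x < p) ==> (x \in I)]].
Definition tm p I : bool := [&& p \in I & [forall x, (p < x) ==> (x \notin I)]].
Lemma TplusE p I : Tplus p I = tp p I. Proof. by []. Qed.
Lemma TminusE p I : Tminus p I = tm p I. Proof. by []. Qed.

Lemma tpP p I : reflect (p \notin I /\ forall x, x < p -> x \in I) (tp p I).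
Proof.
apply: (iffP andP) => [[h1 /forallP h2]|[h1 h2]]; split=> //.
  by move=> x /(implyP (h2 x)).
by apply/forallP => x; apply/implyP/h2.
Qed.

Lemma tmP p I : reflect (p \in I /\ forall x, p < x -> x \notin I) (tm p I).
Proof.
apply: (iffP andP) => [[h1 /forallP h2]|[h1 h2]]; split=> //.
  by move=> x /(implyP (h2 x)).
by apply/forallP => x; apply/implyP/h2.
Qed.

Lemma idealP I : reflect (forall x y, x \in I -> y <= x -> y \in I) (I \in order_ideals P).
Proof.
rewrite inE; apply: (iffP forallP) => [h x y hx hy|h x].
  by move: (h x) => /forallP /(_ y) /implyP; apply; rewrite hx hy.
by apply/forallP => y; apply/implyP => /andP [hx hy]; exact: h hx hy.
Qed.

Definition Row I : {set P} := [set x | [exists y, tp y I && (x <= y)]].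

Lemma Row_ideal I : Row I \in order_ideals P.
Proof.
apply/idealP => x y; rewrite !inE => /existsP [w /andP [hw hxw]] hyx.
by apply/existsP; exists w; rewrite hw (le_trans hyx hxw).
Qed.

Lemma tm_Row p I : tm p (Row I) = tp p I.
Proof.
apply/tmP/tpP => [[hp hmax]|[hp hmin]].
  move: hp; rewrite inE => /existsP [w /andP [/tpP [hw1 hw2] hpw]].
  case: (eqVneq p w) => [->|hne]; first by split.
  have hlt : p < w by rewrite lt_neqAle hne hpw.
  have := hmax w hlt; rewrite inE => /existsP; case; exists w.
  by rewrite le_refl andbT; apply/tpP.
split.
  by rewrite inE; apply/existsP; exists p; rewrite le_refl andbT; apply/tpP.
move=> x hpx; rewrite inE; apply/negP => /existsP [w /andP [/tpP [hw1 hw2] hxw]].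
have hpw : p < w by apply: lt_le_trans hpx hxw.
by move: (hw2 p hpw); rewrite (negbTE hp).
Qed.

Lemma set0_ideal : set0 \in order_ideals P.
Proof. by apply/idealP => x y; rewrite inE. Qed.

Lemma tm_set0 p : tm p set0 = false.
Proof. by apply/tmP; rewrite inE; case. Qed.

Definition Dn p : {set P} := [set x | x <= p].
Lemma Dn_ideal p : Dn p \in order_ideals P.
Proof. by apply/idealP => x y; rewrite !inE => hx hy; apply: le_trans hy hx. Qed.

Lemma tm_Dn r p : tm r (Dn p) = (r == p).
Proof.
apply/tmP/eqP => [[hr hmax]|->].
  move: hr; rewrite inE le_eqVlt => /orP [/eqP //|hlt].
  by move: (hmax p hlt); rewrite inE le_refl.
split; first by rewrite inE.
by move=> x hx; rewrite inE; apply/negP => hxp; move: (lt_le_trans hx hxp); rewrite ltxx.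
Qed.

Lemma setT_ideal : setT \in order_ideals P.
Proof. by apply/idealP => x y; rewrite !inE. Qed.

Lemma tp_setT p : tp p setT = false.
Proof. by apply/tpP; rewrite inE; case. Qed.

Definition Nup p : {set P} := [set x | ~~ (p <= x)].
Lemma Nup_ideal p : Nup p \in order_ideals P.
Proof.
apply/idealP => x y; rewrite !inE => hx hy; apply/negP => hpy.
by move: hx; rewrite (le_trans hpy hy).
Qed.

Lemma tp_Nup r p : tp r (Nup p) = (r == p).
Proof.
apply/tpP/eqP => [[hr hmin]|->].
  move: hr; rewrite inE negbK le_eqVlt => /orP [/eqP //|hlt].
  by move: (hmin p hlt); rewrite inE le_refl.
split; first by rewrite inE negbK.
by move=> x hx; rewrite inE; apply/negP => hpx; move: (le_lt_trans hpx hx); rewrite ltxx.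
Qed.

Definition Up p : {set P} := [set x | ~~ (p < x)].
Lemma Up_ideal p : Up p \in order_ideals P.
Proof.
apply/idealP => x y; rewrite !inE => hx hy; apply/negP => hpy.
by move: hx; rewrite (lt_le_trans hpy hy).
Qed.

Lemma tm_Up p : tm p (Up p).
Proof.
apply/tmP; split; first by rewrite inE ltxx.
by move=> x hx; rewrite inE hx.
Qed.

Lemma tp_Up r p : tp r (Up p) -> p < r.
Proof. by case/tpP; rewrite inE negbK. Qed.

Lemma toggle_eq p S : p \notin S ->
  ((p |: S) \in order_ideals P) && tm p (p |: S) = (S \in order_ideals P) && tp p S.
Proof.
move=> hpS; apply/andP/andP => [[/idealP hid /tmP [_ hmax]]|[/idealP hid /tpP [_ hmin]]].
  split.
    apply/idealP => x y hx hy.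
    have : y \in p |: S by apply: hid hy; rewrite inE hx orbT.
    rewrite in_setU1 => /orP [/eqP eyp|//].
    have hpx : p < x.
      rewrite lt_neqAle -eyp hy andbT; apply/negP => /eqP epx.
      by move: hpS; rewrite -eyp epx hx.
    by move: (hmax x hpx); rewrite inE hx orbT.
  apply/tpP; split=> // x hx.
  have : x \in p |: S by apply: hid (ltW hx); rewrite setU11.
  rewrite in_setU1 => /orP [/eqP exp|//].
  by move: hx; rewrite exp ltxx.
split.
  apply/idealP => x y; rewrite !in_setU1 => /orP [/eqP ->|hx] hy.
    move: hy; rewrite le_eqVlt => /orP [->//|hlt].
    by rewrite hmin ?orbT.
  by rewrite (hid x y hx hy) orbT.
apply/tmP; split; first by rewrite setU11.
move=> x hx; rewrite in_setU1 negb_or; apply/andP; split.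
  by apply/negP => /eqP exp; move: hx; rewrite exp ltxx.
by apply/negP => hxS; move: hpS; rewrite (hid x p hxS (ltW hx)).
Qed.

Lemma tp_mono p r I : r != p -> tp r I -> tp r (p |: I).
Proof.
move=> hne /tpP [h1 h2]; apply/tpP; split.
  by rewrite in_setU1 negb_or hne h1.
by move=> x hx; rewrite in_setU1 h2 ?orbT.
Qed.

Lemma tm_mono p r I : r != p -> tm r (p |: I) -> tm r I.
Proof.
move=> hne /tmP [h1 h2]; apply/tmP; split.
  by move: h1; rewrite in_setU1 (negbTE hne).
move=> x hx; move: (h2 x hx); rewrite in_setU1 negb_or => /andP [].
by [].
Qed.

End Comb.
Section Real.
Context {d : Order.disp_t} (P : finPOrderType d) (R : realType).
Local Open Scope ring_scope.
Implicit Types (I S : {set P}) (p r x y : P).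

Lemma pigeon (T : finType) (f : nat -> T) : exists i j, (i < j)%N /\ f i = f j.
Proof.
pose g := fun i : 'I_(#|T|.+1) => f i.
have : ~~ injectiveb g.
  apply/negP => /injectiveP /leq_card; rewrite card_ord ltnn //.
case/injectivePn => i [j hij hg].
case: (ltngtP i j) => [h|h|/val_inj h]; last by move: hij; rewrite h eqxx.
  by exists i, j.
by exists j, i.
Qed.

Lemma toggle_sum p (phi : {set P} -> R) :
  \sum_(I in order_ideals P) (Tminus p I)%:R * phi I =
  \sum_(I in order_ideals P) (Tplus p I)%:R * phi (p |: I).
Proof.
pose t S := if p \in S then S :\ p else p |: S.
have tK : involutive t.
  move=> S; rewrite /t; case: (boolP (p \in S)) => hp.
    by rewrite setD11 setD1K.
  by rewrite setU11 setU1K.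
rewrite big_mkcond [RHS]big_mkcond (reindex_inj (inv_inj tK)) /=.
apply: eq_bigr => S _; rewrite /t; case: (boolP (p \in S)) => hp.
  have -> : Tminus p (S :\ p) = 0%N.
    by rewrite TminusE; case: (boolP (tm _ _)) => // /tmP []; rewrite setD11.
  have -> : Tplus p S = 0%N by rewrite TplusE; case: (boolP (tp _ _)) => // /tpP []; rewrite hp.
  by rewrite !mul0r !if_same.
have := toggle_eq hp; rewrite TminusE TplusE.
case: (p |: S \in order_ideals P); case: (tm p (p |: S));
case: (S \in order_ideals P); case: (tp p S) => //= _; by rewrite mul0r.
Qed.

End Real.
Section Indep.
Context {d : Order.disp_t} (P : finPOrderType d) (R : realType).
Local Open Scope ring_scope.
Implicit Types (I S : {set P}) (p r x y : P).

Lemma sum_delta (b : P -> R) p (e : P -> bool) :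
  (forall r, e r = (r == p)) -> \sum_r b r * (e r : nat)%:R = b p.
Proof.
move=> he; rewrite (bigD1 p) //= he eqxx mulr1 big1 ?addr0 // => r hr.
by rewrite he (negbTE hr) mulr0.
Qed.

Lemma indep_z0 (a : R) (b : P -> R) :
  (forall I, I \in order_ideals P -> a + \sum_p b p * Tq_at p I 0 = 0) ->
  a = 0 /\ forall p, b p = 0.
Proof.
move=> h.
have ha : a = 0.
  have := h _ (setT_ideal P); rewrite big1 ?addr0 // => p _.
  by rewrite /Tq_at TplusE tp_setT mul0r subr0 mulr0.
split=> // p.
have := h _ (Nup_ideal p); rewrite ha add0r.
under eq_bigr => r _ do rewrite /Tq_at mul0r subr0 TplusE.
by rewrite (sum_delta _ (fun r => tp_Nup r p)).
Qed.

Lemma iter_Row_ideal m I : I \in order_ideals P -> iter m (@Row _ P) I \in order_ideals P.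
Proof. by case: m => [//|m] _; rewrite iterS Row_ideal. Qed.

Lemma indep_gen (z : R) (a : R) (b : P -> R) : 0 < z -> z != 1 ->
  (forall I, I \in order_ideals P -> a + \sum_p b p * Tq_at p I z = 0) ->
  a = 0 /\ forall p, b p = 0.
Proof.
move=> zgt0 zn1 h.
have z1 : 1 - z != 0 by rewrite subr_eq0 eq_sym.
pose G I := \sum_p b p * (Tminus p I)%:R.
pose k := a / (1 - z).
pose H I := G I + k.
have hG : forall I, I \in order_ideals P -> a + G (Row I) - z * G I = 0.
  move=> I hI; rewrite -(h I hI) /G /Tq_at -addrA; congr (_ + _).
  rewrite mulr_sumr -sumrB; apply: eq_bigr => p _.
  by rewrite TminusE tm_Row -TplusE mulrBr mulrCA.
have hH : forall I, I \in order_ideals P -> H (Row I) = z * H I.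
  move=> I hI; rewrite /H.
  have -> : G (Row I) = z * G I - a by have := hG I hI; lra.
  have hk : a = k * (1 - z) by rewrite /k divfK.
  by rewrite hk; ring.
have hiter : forall m I, I \in order_ideals P -> H (iter m (@Row _ P) I) = z ^+ m * H I.
  elim=> [|m IH] I hI; first by rewrite expr0 mul1r.
  by rewrite iterS hH ?iter_Row_ideal // IH // exprS mulrA.
have H0 : forall I, I \in order_ideals P -> H I = 0.
  move=> I hI; have [i [j [hij e]]] := pigeon (fun m => iter m (@Row _ P) I).
  have := hiter j I hI; rewrite -e hiter // => /eqP.
  rewrite -subr_eq0 -mulrBl mulf_eq0 => /orP [|/eqP //].
  rewrite -(subnKC (ltnW hij)) exprD -{1}(mulr1 (z ^+ i)) -mulrBr mulf_eq0.
  rewrite expf_eq0 (gt_eqF zgt0) andbF /= subr_eq0 eq_sym pexpr_eq1 ?subn_gt0 ?ltW //.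
  by rewrite (negbTE zn1).
have hk0 : k = 0.
  have := H0 _ (set0_ideal P); rewrite /H /G big1 ?add0r // => p _.
  by rewrite TminusE tm_set0 mulr0.
have ha : a = 0 by rewrite -(divfK z1 a) -/k hk0 mul0r.
split=> // p.
have := H0 _ (Dn_ideal p); rewrite /H /G hk0 addr0.
by rewrite (sum_delta _ (fun r => tm_Dn r p)).
Qed.
End Indep.
Section SQ.
Context {d : Order.disp_t} (P : finPOrderType d) (R : realType).
Local Open Scope ring_scope.
Lemma sq_expand (J : {set {set P}}) (w : P -> R) (T : P -> {set P} -> R) :
  \sum_(I in J) (\sum_r w r * T r I) ^+ 2 =
  \sum_p w p * \sum_r w r * \sum_(I in J) T p I * T r I.
Proof.
transitivity (\sum_(I in J) \sum_p (w p * T p I * \sum_r w r * T r I)).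
  by apply: eq_bigr => I _; rewrite expr2 mulr_suml.
rewrite exchange_big /=; apply: eq_bigr => p _.
transitivity (\sum_r \sum_(I in J) w p * (w r * (T p I * T r I))); last first.
  rewrite mulr_sumr; apply: eq_bigr => r _; rewrite !mulr_sumr; apply: eq_bigr => I _.
  by [].
rewrite exchange_big /=; apply: eq_bigr => I _.
rewrite mulr_sumr; apply: eq_bigr => r _; ring.
Qed.
End SQ.
Section Indep1.
Context {d : Order.disp_t} (P : finPOrderType d) (R : realType).
Local Open Scope ring_scope.
Implicit Types (I S : {set P}) (p r x y : P).

Lemma indep_z1 (a : R) (b : P -> R) :
  (forall I, I \in order_ideals P -> a + \sum_p b p * Tq_at p I 1 = 0) ->
  a = 0 /\ forall p, b p = 0.
Proof.
move=> h0.
pose T p I : R := (Tplus p I)%:R - (Tminus p I)%:R.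
have h : forall I, I \in order_ideals P -> a + \sum_p b p * T p I = 0.
  move=> I hI; rewrite -[RHS](h0 I hI); congr (_ + _); apply: eq_bigr => p _.
  by rewrite /Tq_at mul1r.
have sumT : forall p, \sum_(I in order_ideals P) T p I = 0.
  move=> p; rewrite /T sumrB.
  rewrite (eq_bigr (fun I => (Tplus p I)%:R * 1)) => [|I _]; last by rewrite mulr1.
  rewrite -(toggle_sum p (fun _ => 1)).
  by rewrite (eq_bigr (fun I => (Tminus p I)%:R)) ?subrr // => I _; rewrite mulr1.
have ha : a = 0.
  have : \sum_(I in order_ideals P) (a + \sum_p b p * T p I) = 0 by apply: big1.
  rewrite big_split /= sumr_const exchange_big /= big1 ?addr0; last first.
    by move=> p _; rewrite -mulr_sumr sumT mulr0.
  move/eqP; rewrite mulrn_eq0 => /orP [|/eqP //].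
  have : (0 < #|order_ideals P|)%N by apply/card_gt0P; exists set0; exact: set0_ideal.
  by rewrite lt0n => /negbTE ->.
have hb : forall I, I \in order_ideals P -> \sum_r b r * T r I = 0.
  by move=> I hI; rewrite -[RHS](h I hI) ha add0r.
pose Gm p r := \sum_(I in order_ideals P) T p I * T r I.
have Gle : forall p r, r != p -> Gm p r <= 0.
  move=> p r hne; rewrite /Gm {1}/T.
  under eq_bigr do rewrite mulrBl.
  rewrite sumrB (toggle_sum p (T r)) -sumrB; apply: sumr_le0 => I hI.
  rewrite -mulrBr TplusE; case: (tp p I); last by rewrite mul0r.
  rewrite mul1r /T !TplusE !TminusE.
  have h1 := tp_mono (p:=p) (I:=I) hne; have h2 := tm_mono (p:=p) (I:=I) hne.
  case: (tp r I) (tp r (p |: I)) (tm r I) (tm r (p |: I)) h1 h2 => [] [] [] [] //= h1 h2;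
    rewrite ?mulr1n ?mulr0n; first [lra | by have := h1 isT | by have := h2 isT].
have Gpp : forall p, 0 <= Gm p p.
  by move=> p; apply: sumr_ge0 => I _; rewrite -expr2 sqr_ge0.
pose w : P -> R := fun r => `|b r|.
have hzero : forall p, \sum_r b r * Gm p r = 0.
  move=> p; rewrite /Gm.
  under eq_bigr do rewrite mulr_sumr.
  rewrite exchange_big /=; apply: big1 => I hI.
  transitivity (T p I * \sum_r b r * T r I); last by rewrite hb // mulr0.
  rewrite mulr_sumr; apply: eq_bigr => r _.
  by rewrite mulrCA.
have hw : forall p, \sum_r w r * Gm p r <= 0.
  move=> p; rewrite (bigD1 p) //=.
  have := hzero p; rewrite (bigD1 p) //= => e.
  have e2 : b p * Gm p p = - \sum_(r | r != p) b r * Gm p r.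
    by apply/eqP; rewrite -addr_eq0 e.
  have : w p * Gm p p <= \sum_(r | r != p) w r * (- Gm p r).
    rewrite /w -(ger0_norm (Gpp p)) -normrM e2 normrN.
    apply: le_trans (ler_norm_sum _ _ _) _.
    apply: ler_sum => r hr; rewrite normrM (ler0_norm (Gle _ _ hr)).
    by [].
  have -> : \sum_(r | r != p) w r * (- Gm p r) = - \sum_(r | r != p) w r * Gm p r.
    by rewrite -sumrN; apply: eq_bigr => r _; rewrite mulrN.
  lra.
have hsq : \sum_(I in order_ideals P) (\sum_r w r * T r I) ^+ 2 <= 0.
  rewrite sq_expand.
  apply: sumr_le0 => p _; apply: mulr_ge0_le0; first exact: normr_ge0.
  exact: hw.
have hW : forall I, I \in order_ideals P -> \sum_r w r * T r I = 0.
  move=> I hI; apply/eqP; rewrite -sqrf_eq0; apply/eqP.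
  have e : \sum_(I in order_ideals P) (\sum_r w r * T r I) ^+ 2 = 0.
    by apply/le_anti; rewrite hsq sumr_ge0 // => J _; exact: sqr_ge0.
  exact: (psumr_eq0P (fun J _ => sqr_ge0 _) e) I hI.
have w0 : forall n p, (#|[set x | (p < x)%O]| < n)%N -> w p = 0.
  elim=> [//|n IH] p hn.
  have habove : forall x, (p < x)%O -> w x = 0.
    move=> x hx; apply: IH.
    have hc : (#|[set y | (x < y)%O]| < #|[set y | (p < y)%O]|)%N.
      apply: proper_card; apply/properP; split.
        by apply/subsetP => y; rewrite !inE => hy; exact: lt_trans hx hy.
      by exists x; rewrite !inE ?ltxx // hx.
    by rewrite ltnS in hn; exact: leq_trans hc hn.
  have := hW _ (Up_ideal p).
  rewrite (eq_bigr (fun r => - (w r * (Tminus r (Up p))%:R))) => [|r _]; last first.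
    rewrite /T mulrBr.
    have -> : w r * (Tplus r (Up p))%:R = 0.
      rewrite TplusE; case e : (tp r (Up p)); last by rewrite mulr0.
      by rewrite habove ?mul0r // (tp_Up e).
    by rewrite add0r.
  rewrite sumrN => /eqP; rewrite oppr_eq0 => /eqP e.
  have := psumr_eq0P (fun r _ => mulr_ge0 (normr_ge0 (b r)) (ler0n _ _)) e (i:=p) isT.
  by rewrite TminusE tm_Up mulr1.
split=> // p; apply/eqP; rewrite -normr_eq0; apply/eqP.
exact: (w0 _ p (ltnSn _)).
Qed.

Lemma indep (z : R) (a : R) (b : P -> R) : 0 <= z ->
  (forall I, I \in order_ideals P -> a + \sum_p b p * Tq_at p I z = 0) ->
  a = 0 /\ forall p, b p = 0.
Proof.
rewrite le_eqVlt => /orP [/eqP <-|zgt0]; first exact: indep_z0.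
case: (eqVneq z 1) => [->|zn1]; first exact: indep_z1.
exact: indep_gen.
Qed.

End Indep1.
Section Alg.
Context {d : Order.disp_t} (P : finPOrderType d) (R : realType).
Local Open Scope ring_scope.
Local Open Scope quotient_scope.
Implicit Types (I S : {set P}) (p r : P).

Definition fnum (x : ratfun R) : {poly R} := \n_(repr x).
Definition fden (x : ratfun R) : {poly R} := \d_(repr x).

Lemma fden_neq0 x : fden x != 0.
Proof. exact: denom_ratioP. Qed.

Lemma fracE x : x = tofrac (fnum x) / tofrac (fden x).
Proof.
rewrite /fnum /fden; set r := repr x.
have -> : x = \pi_(ratfun R) r by rewrite /r reprK.
have hd : tofrac (\d_r) != 0 by rewrite tofrac_eq0 denom_ratioP.
apply: (mulIf hd); rewrite divfK //.
unlock tofrac.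
have -> : forall a b : ratfun R, a * b = FracField.mul a b by [].
rewrite -FracField.pi_mul.
apply/eqmodP => /=.
rewrite /FracField.equivf /FracField.mulf !numden_Ratio ?mulr1 ?mul1r ?oner_eq0 ?mulf_neq0 ?denom_ratioP //.
by rewrite mulrC.
Qed.

Lemma cancel_frac (a b L : {poly R}) : L != 0 ->
  tofrac (a * L) / tofrac (b * L) = tofrac a / tofrac b :> ratfun R.
Proof.
move=> hL; rewrite !tofracM invfM mulrACA divff ?mulr1 //.
by rewrite tofrac_eq0.
Qed.

Definition Tpoly p I : {poly R} := (Tplus p I)%:R - 'X * (Tminus p I)%:R.

Lemma hornerT p I z : (Tpoly p I).[z] = Tq_at p I z.
Proof. by rewrite /Tpoly /Tq_at hornerD hornerN mulrC hornerMX !hornerMn -polyC1 hornerC mulrC. Qed.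

Lemma TqE p I : Tq R p I = tofrac (Tpoly p I).
Proof. by []. Qed.

End Alg.
Section Desc.
Context {d : Order.disp_t} (P : finPOrderType d) (R : realType).
Local Open Scope ring_scope.
Implicit Types (I S : {set P}) (p r : P).

Lemma descent (f : {set P} -> R) (c : ratfun R) (cp : P -> ratfun R) (z : R) : 0 <= z ->
  forall n (D Nc : {poly R}) (Np : P -> {poly R}), D != 0 -> (size D <= n)%N ->
  c = tofrac Nc / tofrac D -> (forall p, cp p = tofrac (Np p) / tofrac D) ->
  (forall I, I \in order_ideals P -> (f I)%:P * D = Nc + \sum_p Np p * Tpoly R p I) ->
  exists (cz : R) (cpz : P -> R),
      [/\ regular_at_with_value c z cz,
          (forall p, regular_at_with_value (cp p) z (cpz p)) &
          (forall I, I \in order_ideals P ->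
             f I = cz + \sum_(p : P) cpz p * Tq_at p I z)].
Proof.
move=> z0; elim=> [|n IH] D Nc Np hD hs hc hcp hid.
  by move: hs; rewrite leqn0 size_poly_eq0 (negbTE hD).
have hev : forall I, I \in order_ideals P ->
    f I * D.[z] = Nc.[z] + \sum_p (Np p).[z] * Tq_at p I z.
  move=> I hI; have := congr1 (fun q => q.[z]) (hid I hI).
  rewrite /= hornerM hornerC hornerD horner_sum => ->; congr (_ + _).
  by apply: eq_bigr => p _; rewrite hornerM hornerT.
case: (eqVneq D.[z] 0) => hDz; last first.
  exists (Nc.[z] / D.[z]), (fun p => (Np p).[z] / D.[z]); split.
  - by exists Nc, D; split.
  - by move=> p; exists (Np p), D; split.
  move=> I hI; apply: (mulIf hDz); rewrite hev // mulrDl divfK // mulr_suml.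
  congr (_ + _); apply: eq_bigr => p _; by rewrite mulrAC divfK.
have hev0 : forall I, I \in order_ideals P ->
    Nc.[z] + \sum_p (Np p).[z] * Tq_at p I z = 0.
  by move=> I hI; rewrite -hev // hDz mulr0.
have [hNc hNp] := indep z0 hev0.
pose L : {poly R} := 'X - z%:P.
have hL : L != 0 by rewrite polyXsubC_eq0.
have dv : forall q : {poly R}, q.[z] = 0 -> q = q %/ L * L.
  by move=> q hq; rewrite divpK // dvdp_XsubCl; apply/rootP.
apply: (IH (D %/ L) (Nc %/ L) (fun p => Np p %/ L)).
- by apply/negP => /eqP h1; move: hD; rewrite (dv D hDz) h1 mul0r eqxx.
- by rewrite size_divp // size_XsubC /= leq_subLR add1n.
- by rewrite hc -(cancel_frac (Nc %/ L) (D %/ L) hL) -!dv.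
- by move=> p; rewrite hcp -(cancel_frac (Np p %/ L) (D %/ L) hL) -!dv.
move=> I hI; apply: (mulIf hL).
rewrite -mulrA -dv // hid // mulrDl -dv // mulr_suml; congr (_ + _).
by apply: eq_bigr => p _; rewrite mulrAC -dv.
Qed.

End Desc.

Unset Implicit Arguments.
Local Open Scope ring_scope.

Theorem lemma5p6 (R : realType) (d : Order.disp_t) (P : finPOrderType d)
    (f : {set P} -> R) (c : ratfun R) (cp : P -> ratfun R) :
  (forall I, I \in order_ideals P ->
     rconst (f I) = c + \sum_(p : P) cp p * Tq R p I) ->
  forall z : R, 0 <= z ->
    exists (cz : R) (cpz : P -> R),
      [/\ regular_at_with_value c z cz,
          (forall p, regular_at_with_value (cp p) z (cpz p)) &
          (forall I, I \in order_ideals P ->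
             f I = cz + \sum_(p : P) cpz p * Tq_at p I z)].
Proof.
move=> hf z z0.
pose Pi := \prod_(r : P) fden (cp r).
have hPi : Pi != 0 by apply/prodf_neq0 => r _; exact: fden_neq0.
have hc0 := fden_neq0 c.
pose D := fden c * Pi.
pose Nc := fnum c * Pi.
pose Np p := fnum (cp p) * (fden c * \prod_(r | r != p) fden (cp r)).
have hD : D != 0 by rewrite mulf_neq0.
have hc : c = tofrac Nc / tofrac D by rewrite cancel_frac // -fracE.
have hcp : forall p, cp p = tofrac (Np p) / tofrac D.
  move=> p.
  have -> : D = fden (cp p) * (fden c * \prod_(r | r != p) fden (cp r)).
    by rewrite /D /Pi (bigD1 p) //= mulrCA.
  rewrite /Np cancel_frac -?fracE // mulf_neq0 //; apply/prodf_neq0 => r _; exact: fden_neq0.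
apply: (descent z0 (n := size D) hD (leqnn _) hc hcp) => I hI.
apply/eqP; rewrite -tofrac_eq; apply/eqP.
have htD : tofrac D != 0 :> ratfun R by rewrite tofrac_eq0.
rewrite tofracM -[tofrac (f I)%:P]/(rconst (f I)) (hf I hI) tofracD rmorph_sum mulrDl mulr_suml.
congr (_ + _); first by rewrite {1}hc (divfK htD).
apply: eq_bigr => p _; by rewrite TqE mulrAC {1}hcp divfK // -rmorphM.
Qed.
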